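(* Let $\boldsymbol\Sigma$ be a positive definite $n\times n$ covariance matrix associated with locations $s_1,\dots,s_n$ (in a fixed order). For $m\ge0$, let $\mathbf Q(m)=(\mathbf I-\mathbf B(m))^\top\mathbf F(m)^{-1}(\mathbf I-\mathbf B(m))$ be the NNGP precision matrix derived from $\boldsymbol\Sigma$ with neighbor sets $N_m(i)$ of size $\min(m,i-1)$ consisting of nearest previous locations, nested in $m$ (i.e. $N_m(i)\subseteq N_{m+1}(i)$). Let $\mathbf E(m)=(\boldsymbol\Sigma^{1/2})^\top\mathbf Q(m)\boldsymbol\Sigma^{1/2}$ and $\mathrm{KLD}(\mathbf I,\mathbf E(m))=\operatorname{tr}(\mathbf E(m))-\log|\mathbf E(m)|$. Then $\mathrm{KLD}(\mathbf I,\mathbf E(m))$ decreases monotonically with $m$.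
   Context: $\boldsymbol\Sigma^{1/2}(\boldsymbol\Sigma^{1/2})^\top=\boldsymbol\Sigma$. NNGP construction with neighbor sets $N(i)\subseteq\{1,\dots,i-1\}$: $\mathbf B$ strictly lower triangular with $\mathbf B_{i,N(i)}=\boldsymbol\Sigma(i,N(i))\boldsymbol\Sigma(N(i),N(i))^{-1}$, zero elsewhere; $\mathbf F$ diagonal with $\mathbf F_{ii}=\boldsymbol\Sigma_{ii}-\boldsymbol\Sigma(i,N(i))\boldsymbol\Sigma(N(i),N(i))^{-1}\boldsymbol\Sigma(N(i),i)$ (with $\mathbf F_{ii}=\boldsymbol\Sigma_{ii}$ if $N(i)=\emptyset$). $m=0$ gives $\mathbf Q(0)$ diagonal. *)

(* Defs.v *)
From HB Require Import structures.
From mathcomp Require Import all_boot all_order all_algebra.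
From mathcomp Require Import reals exp.
Set Implicit Arguments. Unset Strict Implicit. Unset Printing Implicit Defensive.
Import Order.TTheory GRing.Theory Num.Theory.
Local Open Scope ring_scope.

Section NNGP.
Variable R : realType.
Variable n : nat.

Definition posdef (S : 'M[R]_n) : Prop :=
  S^T = S /\ forall x : 'cV[R]_n, x != 0 -> 0 < (x^T *m S *m x) 0 0.

(* Selection matrix of an index set A: row a is the unit row e_{enum_val a}.
   P *m S *m P^T = S(A,A), row i S *m P^T = S(i,A). *)
Definition sub_idx (A : {set 'I_n}) : 'M[R]_(#|A|, n) :=
  \matrix_(a, j) (enum_val a == j)%:R.

(* NNGP B: row i is Sigma(i,N(i)) Sigma(N(i),N(i))^{-1} placed on columns N(i), zero elsewhere. *)
Definition nngp_B (S : 'M[R]_n) (N : 'I_n -> {set 'I_n}) : 'M[R]_n :=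
  \matrix_i (row i S *m (sub_idx (N i))^T
             *m invmx (sub_idx (N i) *m S *m (sub_idx (N i))^T) *m sub_idx (N i)).

Definition nngp_F (S : 'M[R]_n) (N : 'I_n -> {set 'I_n}) : 'M[R]_n :=
  diag_mx (\row_i (S i i -
     (row i S *m (sub_idx (N i))^T
        *m invmx (sub_idx (N i) *m S *m (sub_idx (N i))^T)
        *m (row i S *m (sub_idx (N i))^T)^T) 0 0)).

Definition nngp_Q (S : 'M[R]_n) (N : 'I_n -> {set 'I_n}) : 'M[R]_n :=
  (1%:M - nngp_B S N)^T *m invmx (nngp_F S N) *m (1%:M - nngp_B S N).

Definition KLD_I (E : 'M[R]_n) : R := \tr E - ln (\det E).

End NNGP.

Definition eucl_dist (R : realType) (d : nat) (x y : 'rV[R]_d) : R :=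
  Num.sqrt (\sum_(k < d) (x 0 k - y 0 k) ^+ 2).

(* Main.v *)
Require Import Defs.
From HB Require Import structures.
From mathcomp Require Import all_boot all_order all_algebra.
From mathcomp Require Import reals exp.
Import Order.TTheory GRing.Theory Num.Theory.
Local Open Scope ring_scope.

Section Aux.
Variable R : realType.
Variable n : nat.
Variable S : 'M[R]_n.
Hypothesis Spd : posdef S.

Definition qf (u : 'rV[R]_n) : R := (u *m S *m u^T) 0 0.

Lemma Ssym : S^T = S. Proof. by case: Spd. Qed.

Lemma qf_gt0 u : u != 0 -> 0 < qf u.
Proof.
move=> nz; case: Spd => _ H; have := H u^T.
rewrite trmxK /qf; apply.
by apply: contra nz => /eqP/(congr1 trmx); rewrite trmxK trmx0 => ->.
Qed.

Lemma qf_ge0 u : 0 <= qf u.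
Proof.
case: (eqVneq u 0) => [->|nz]; last exact/ltW/qf_gt0.
by rewrite /qf !mul0mx mxE.
Qed.

Definition Pm (N : {set 'I_n}) := sub_idx R N.
Definition Am N := Pm N *m S *m (Pm N)^T.
Definition cv N i := row i S *m (Pm N)^T.
Definition bv N i := cv N i *m invmx (Am N) *m Pm N.
Definition uv N i := (delta_mx 0 i : 'rV[R]_n) - bv N i.

Lemma PPt N : Pm N *m (Pm N)^T = 1%:M.
Proof.
apply/matrixP => a b; rewrite !mxE (bigD1 (enum_val a)) //= big1.
  by rewrite !mxE eqxx mul1r addr0 (inj_eq enum_val_inj) eq_sym.
by move=> j ja; rewrite !mxE eq_sym (negbTE ja) mul0r.
Qed.

Lemma A_unit N : Am N \in unitmx.
Proof.
rewrite unitmxE unitfE; apply/negP => /det0P [v vnz vA].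
have : 0 < qf (v *m Pm N).
  apply: qf_gt0; apply: contra vnz => /eqP vP0.
  by rewrite -(mulmx1 v) -(PPt N) mulmxA vP0 mul0mx.
suff -> : qf (v *m Pm N) = 0 by rewrite ltxx.
rewrite /qf; have -> : v *m Pm N *m S *m (v *m Pm N)^T = v *m Am N *m v^T.
  by rewrite /Am trmx_mul !mulmxA.
by rewrite vA !mul0mx mxE.
Qed.

Lemma A_sym N : (Am N)^T = Am N.
Proof. by rewrite /Am !trmx_mul trmxK Ssym mulmxA. Qed.

Lemma uSPt N i : uv N i *m S *m (Pm N)^T = 0.
Proof.
rewrite /uv /bv mulmxBl mulmxBl -rowE -/(cv N i).
by rewrite -!mulmxA (mulmxA (Pm N)) -/(Am N) mulVmx ?A_unit // mulmx1 subrr.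
Qed.

Lemma qf_u N i : qf (uv N i) = S i i - (cv N i *m invmx (Am N) *m (cv N i)^T) 0 0.
Proof.
rewrite /qf {2}/uv linearB /= mulmxBr.
have -> : uv N i *m S *m (bv N i)^T = 0.
  by rewrite /bv !trmx_mul !mulmxA uSPt !mul0mx.
rewrite subr0 /uv mulmxBl mulmxBl -rowE.
have -> : bv N i *m S *m (delta_mx 0 i)^T = cv N i *m invmx (Am N) *m (cv N i)^T.
  rewrite /bv -!mulmxA; congr (_ *m (_ *m _)).
  by rewrite /cv trmx_mul trmxK rowE trmx_mul Ssym mulmxA.
by rewrite mxE [in LHS]trmx_delta -colE !mxE.
Qed.

Lemma qf_split N i w : qf (uv N i - w *m Pm N) = qf (uv N i) + qf (w *m Pm N).
Proof.
have := uSPt N i; move: (uv N i) => u hu.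
rewrite /qf linearB /= !mulmxBl !mulmxBr.
have h1 : u *m S *m (w *m Pm N)^T = 0.
  by rewrite trmx_mul mulmxA hu mul0mx.
have h2 : w *m Pm N *m S *m u^T = 0.
  apply: trmx_inj; rewrite trmx0 !trmx_mul trmxK Ssym.
  by rewrite !mulmxA hu mul0mx.
by rewrite h1 h2 subr0 sub0r opprK !mxE.
Qed.


Lemma xP_out (N : {set 'I_n}) (x : 'rV[R]_#|N|) j : j \notin N -> (x *m Pm N) 0 j = 0.
Proof.
move=> jN; rewrite mxE big1 // => a _; rewrite mxE.
suff -> : (enum_val a == j) = false by rewrite mulr0.
apply/negbTE; apply: contra jN => /eqP <-; exact: enum_valP.
Qed.

Lemma uv_entry (N : {set 'I_n}) i j : j \notin N -> uv N i 0 j = (i == j)%:R.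
Proof. by move=> jN; rewrite /uv /bv [LHS]mxE [X in _ + X = _]mxE xP_out // subr0 mxE eqxx eq_sym. Qed.

Lemma uv_nz (N : {set 'I_n}) i : i \notin N -> uv N i != 0.
Proof.
move=> iN; apply/eqP => h; have := congr1 (fun M : 'rV_n => M 0 i) h.
by rewrite uv_entry // eqxx mxE => /eqP; rewrite oner_eq0.
Qed.

Lemma PsubK (N N' : {set 'I_n}) : N \subset N' -> Pm N *m (Pm N')^T *m Pm N' = Pm N.
Proof.
move=> sub; apply/matrixP => a j.
have Ha : enum_val a \in N' := subsetP sub _ (enum_valP a).
have e1 a' : (Pm N *m (Pm N')^T) a a' = (enum_val a == enum_val a')%:R.
  rewrite mxE (bigD1 (enum_val a)) //= big1.
    by rewrite !mxE eqxx mul1r addr0 eq_sym.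
  by move=> k ka; rewrite !mxE eq_sym (negbTE ka) mul0r.
rewrite mxE (bigD1 (enum_rank_in Ha (enum_val a))) //= big1.
  by rewrite e1 !mxE enum_rankK_in // eqxx mul1r addr0.
move=> a' ne; rewrite e1.
suff -> : (enum_val a == enum_val a') = false by rewrite mul0r.
apply/negbTE; apply: contra ne => /eqP e.
apply/eqP; apply: enum_val_inj; rewrite enum_rankK_in //; exact/esym.
Qed.

Lemma bv_sub (N N' : {set 'I_n}) i : N \subset N' -> bv N i *m (Pm N')^T *m Pm N' = bv N i.
Proof.
by move=> h; rewrite /bv -!mulmxA (mulmxA (Pm N) (Pm N')^T) PsubK.
Qed.

Lemma qf_mono (N N' : {set 'I_n}) i : N \subset N' -> qf (uv N' i) <= qf (uv N i).
Proof.
move=> h.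
have -> : uv N i = uv N' i - ((bv N i - bv N' i) *m (Pm N')^T) *m Pm N'.
  rewrite !mulmxBl bv_sub // bv_sub //.
  by rewrite /uv opprB addrA subrK.
by rewrite qf_split lerDl qf_ge0.
Qed.

Definition Fv (N : 'I_n -> {set 'I_n}) i := qf (uv (N i) i).

Lemma nngpF_diag N : nngp_F S N = diag_mx (\row_i Fv N i).
Proof.
rewrite /nngp_F; congr diag_mx; apply/rowP => i.
by rewrite mxE [RHS]mxE /Fv qf_u.
Qed.

Lemma IB_entry N i j : (1%:M - nngp_B S N) i j = uv (N i) i 0 j.
Proof.
rewrite /uv [LHS]mxE [RHS]mxE; congr (_ + _).
  by rewrite !mxE eqxx (eq_sym j).
rewrite [LHS]mxE [RHS]mxE; congr (- _).
by rewrite /nngp_B mxE.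
Qed.


Section WithN.
Variable N : 'I_n -> {set 'I_n}.
Hypothesis hN : forall i, N i \subset [set j : 'I_n | (j < i)%N].

Lemma notin_lt (i j : 'I_n) : (i <= j)%N -> j \notin N i.
Proof.
move=> le; apply/negP => /(subsetP (hN i)); rewrite inE => lt.
by move: (leq_trans lt le); rewrite ltnn.
Qed.

Lemma Fv_pos i : 0 < Fv N i.
Proof. exact/qf_gt0/uv_nz/notin_lt. Qed.

Lemma detIB : \det (1%:M - nngp_B S N) = 1.
Proof.
rewrite det_trig; last first.
  apply/is_trig_mxP => i j lt.
  rewrite IB_entry.
  rewrite uv_entry; last exact: notin_lt (ltnW lt).
  have /negbTE -> : i != j by apply: contraTneq lt => ->; rewrite ltnn.
  by [].
by rewrite big1 // => i _; rewrite IB_entry uv_entry ?notin_lt // eqxx.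
Qed.

Lemma invF : invmx (nngp_F S N) = diag_mx (\row_i (Fv N i)^-1).
Proof.
have Du : nngp_F S N \in unitmx.
  rewrite nngpF_diag unitmxE det_diag unitfE; apply/prodf_neq0 => i _.
  by rewrite mxE; exact/lt0r_neq0/Fv_pos.
have h : nngp_F S N *m diag_mx (\row_i (Fv N i)^-1) = 1%:M.
  rewrite nngpF_diag mul_diag_mx; apply/matrixP => a b; rewrite !mxE.
  case: eqVneq => [->|_]; last by rewrite !mulr0n mulr0.
  by rewrite !mulr1n mulfV // lt0r_neq0 // Fv_pos.
by rewrite -[RHS](mulKmx Du) h mulmx1.
Qed.

Lemma diag_qf (A : 'M[R]_n) i : (A *m S *m A^T) i i = qf (row i A).
Proof.
have -> : (A *m S *m A^T) i i = (row i (A *m S *m A^T)) 0 i by rewrite [RHS]mxE.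
rewrite /qf !row_mul; move: (row i A *m S) => X.
by rewrite !mxE; apply: eq_bigr => k _; rewrite !mxE.
Qed.

Lemma IB_row i : row i (1%:M - nngp_B S N) = uv (N i) i.
Proof. by apply/rowP => j; rewrite mxE IB_entry. Qed.

Lemma trE (Sh : 'M[R]_n) : Sh *m Sh^T = S ->
  \tr (Sh^T *m nngp_Q S N *m Sh) = n%:R.
Proof.
move=> hS; rewrite mxtrace_mulC mulmxA hS /nngp_Q !mulmxA mxtrace_mulC !mulmxA.
rewrite invF mul_mx_diag /mxtrace.
under eq_bigr do rewrite mxE diag_qf IB_row mxE -/(Fv N _) mulfV ?lt0r_neq0 ?Fv_pos //.
by rewrite sumr_const card_ord.
Qed.

Lemma detE (Sh : 'M[R]_n) : Sh *m Sh^T = S ->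
  \det (Sh^T *m nngp_Q S N *m Sh) = \det S * (\prod_i Fv N i)^-1.
Proof.
move=> hS; have dS : \det S = \det Sh * \det Sh by rewrite -hS det_mulmx det_tr.
rewrite /nngp_Q !det_mulmx !det_tr detIB invF det_diag dS.
under eq_bigr do rewrite mxE.
by rewrite prodfV mulr1 mul1r mulrAC.
Qed.

End WithN.

Lemma detS_pos (Sh : 'M[R]_n) : Sh *m Sh^T = S -> 0 < \det S.
Proof.
move=> hS.
have nz : \det S != 0.
  apply/negP => /det0P [v nz vS].
  have := @qf_gt0 v nz; rewrite /qf vS mul0mx mxE ltxx //.
move: nz; rewrite -hS det_mulmx det_tr => nz.
by rewrite lt_def nz /= -expr2 sqr_ge0.
Qed.

End Aux.

Theorem propositionS2 (R : realType) (n d : nat)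
  (Sigma : 'M[R]_n) (Shalf : 'M[R]_n) (s : 'I_n -> 'rV[R]_d)
  (N : nat -> 'I_n -> {set 'I_n}) :
  posdef Sigma ->
  Shalf *m Shalf^T = Sigma ->
  (* N_m(i) consists of previous locations *)
  (forall m (i : 'I_n), N m i \subset [set j : 'I_n | (j < i)%N]) ->
  (* |N_m(i)| = min(m, i-1) (0-based index i has i previous locations) *)
  (forall m (i : 'I_n), #|N m i| = minn m i) ->
  (* nearest previous locations *)
  (forall m (i j k : 'I_n), j \in N m i -> (k < i)%N -> k \notin N m i ->
     eucl_dist (s i) (s j) <= eucl_dist (s i) (s k)) ->
  (* nested in m *)
  (forall m (i : 'I_n), N m i \subset N m.+1 i) ->
  forall m : nat,
    KLD_I (Shalf^T *m nngp_Q Sigma (N m.+1) *m Shalf)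
      <= KLD_I (Shalf^T *m nngp_Q Sigma (N m) *m Shalf).
Proof.
move=> Spd hS hsub _ _ hnest m.
rewrite /KLD_I (trE _ _ _ Spd _ (hsub m.+1) _ hS) (trE _ _ _ Spd _ (hsub m) _ hS).
rewrite (detE _ _ _ Spd _ (hsub m.+1) _ hS) (detE _ _ _ Spd _ (hsub m) _ hS).
have dS := detS_pos _ _ _ Spd _ hS.
have P1 : 0 < \prod_i Fv _ _ Sigma (N m) i.
  by apply: prodr_gt0 => i _; exact: (Fv_pos _ _ _ Spd _ (hsub _)).
have P2 : 0 < \prod_i Fv _ _ Sigma (N m.+1) i.
  by apply: prodr_gt0 => i _; exact: (Fv_pos _ _ _ Spd _ (hsub _)).
rewrite lerD2l lerN2 ler_ln ?posrE ?mulr_gt0 ?invr_gt0 //.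
rewrite ler_pM2l // lef_pV2 ?posrE //.
apply: ler_prod => i _; rewrite ltW ?(Fv_pos _ _ _ Spd _ (hsub _)) //=.
exact: (qf_mono _ _ _ Spd _ _ _ (hnest m i)).
Qed.
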